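(* Let $\bm y=\bm X\bm\beta+\bm z$, where $\bm X\in\mathbb{R}^{n\times p}$ is deterministic of full column rank with unit-norm columns $\bm x_1,\dots,\bm x_p$, $\bm\beta\in\mathbb{R}^p$, and $\bm z\sim N_n(\bm 0,\sigma^2\bm I_n)$. Let $\bm\Sigma=\bm X^\top\bm X$ and, for a fixed $\lambda>0$, $\bm\Sigma_\lambda=\bm\Sigma+\lambda\bm I_p$. Let $\bm s\in\mathbb{R}^p$ have nonnegative entries with $\bm\Sigma-\operatorname{diag}(\bm s)$ positive semidefinite, and let $\widetilde{\bm X}=[\widetilde{\bm x}_1,\dots,\widetilde{\bm x}_p]\in\mathbb{R}^{n\times p}$ be a fixed matrix with $\widetilde{\bm X}^\top\bm X=\bm\Sigma-\operatorname{diag}(\bm s)$ and $\widetilde{\bm x}_j^\top\widetilde{\bm x}_j=1$ for all $j$. Define $\widehat{\bm\beta}_\lambda=\bm\Sigma_\lambda^{-1}\bm X^\top\bm y$ and $\widetilde\beta_{\lambda j}=\widehat\beta_{\lambda j}+[\bm\Sigma_\lambda^{-1}]_{jj}(\widetilde{\bm x}_j^\top\bm y-\bm x_j^\top\bm y)$. If $\beta_j=0$, then $(\widehat\beta_{\lambda j},\widetilde\beta_{\lambda j})\stackrel{d}{=}(\widetilde\beta_{\lambda j},\widehat\beta_{\lambda j})$.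
   Context: $[\bm A]_{jj}$ denotes the $j$-th diagonal entry of a matrix $\bm A$; $\stackrel{d}{=}$ denotes equality in distribution. *)

(* Defs.v *)
From HB Require Import structures.
From mathcomp Require Import all_boot all_order all_algebra.
From mathcomp Require Import all_classical all_reals all_analysis.
Set Implicit Arguments. Unset Strict Implicit. Unset Printing Implicit Defensive.
Import Order.TTheory GRing.Theory Num.Theory.
Local Open Scope classical_set_scope.
Local Open Scope ring_scope.

(* z = (z_1,...,z_n) ~ N_n(0, sigma^2 I_n): the coordinates are measurable,
   each has law N(0, sigma^2) (normal_prob 0 sigma: mean 0, std. dev. sigma),
   and they are mutually independent (product rule for every family of
   measurable sets; taking A i = setT recovers every subfamily). *)
Definition iid_gaussian_vector {d} {T : measurableType d} {R : realType}
  (P : probability T R) (n : nat) (sigma : R) (z : 'I_n -> T -> R) : Prop :=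
  [/\ (forall i, measurable_fun setT (z i)),
      (forall i (A : set R), measurable A ->
          P (z i @^-1` A) = normal_prob 0 sigma A) &
      (forall A : 'I_n -> set R, (forall i, measurable (A i)) ->
          P [set t | forall i, A i (z i t)] =
          (\prod_(i < n) P (z i @^-1` A i))%E)].

Definition eq_in_law2 {d} {T : measurableType d} {R : realType}
  (P : probability T R) (U V : T -> R * R) : Prop :=
  forall A : set (R * R), measurable A -> P (U @^-1` A) = P (V @^-1` A).

Definition psd {R : realType} {p : nat} (M : 'M[R]_p) : Prop :=
  forall v : 'cV[R]_p, 0 <= (v^T *m M *m v) 0 0.

(* Main.v *)
Require Import Defs.
From HB Require Import structures.
From mathcomp Require Import all_boot all_order all_algebra.
From mathcomp Require Import all_classical all_reals all_analysis.
From mathcomp Require Import measurable_realfun ring lra.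
Import Order.TTheory GRing.Theory Num.Theory.
Local Open Scope classical_set_scope.
Local Open Scope ring_scope.

Set Implicit Arguments. Unset Strict Implicit. Unset Printing Implicit Defensive.

Section mpush.
Local Open Scope ereal_scope.
Context d d' (T1 : measurableType d) (T2 : measurableType d') (R : realType).
Variables (m : {measure set T1 -> \bar R}) (f : {mfun T1 >-> T2}).
Definition mpush := pushforward m f.
Let mpush0 : mpush set0 = 0.
Proof. by rewrite /mpush /pushforward preimage_set0 measure0. Qed.
Let mpush_ge0 A : 0 <= mpush A.
Proof. exact: measure_ge0. Qed.
Let mpush_sa : semi_sigma_additive mpush.
Proof.
move=> F mF tF mUF; rewrite /mpush /pushforward preimage_bigcup.
apply: measure_semi_sigma_additive.
- by move=> n; rewrite -[X in measurable X]setTI; exact: measurable_funP.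
- apply/trivIsetP => /= i j _ _ ij; rewrite -preimage_setI.
  by move/trivIsetP : tF => /(_ _ _ _ _ ij) ->//; rewrite preimage_set0.
- by rewrite -preimage_bigcup -[X in measurable X]setTI; exact: measurable_funP.
Qed.
HB.instance Definition _ := isMeasure.Build _ _ _ mpush mpush0 mpush_ge0 mpush_sa.
End mpush.

Definition mkmfun d d' (T1 : measurableType d) (T2 : measurableType d')
  (f : T1 -> T2) (mf : measurable_fun setT f) : {mfun T1 >-> T2} :=
  mfun_Sub (mem_set mf : f \in mfun).

Section shift.
Context {R : realType}.
Local Notation mu := (@lebesgue_measure R).

Local Notation Rm := (measurableTypeR R).
Lemma measurable_addc (c : R) : measurable_fun setT (fun x : Rm => (x : R) + c : Rm).
Proof. by apply: (@measurable_funD _ R R) => //; exact: measurable_cst. Qed.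

Lemma lebesgue_shift (c : R) (A : set R) : measurable A ->
  mu ((fun x => x + c) @^-1` A) = mu A.
Proof.
move=> mA.
rewrite [RHS](@lebesgue_measure_unique R (mpush mu (mkmfun (measurable_addc c))) _ A mA) //.
move=> X [[a b] _ <-] /=.
rewrite /mpush /pushforward /=.
have -> : (fun x => x + c) @^-1` `]a, b] = `]a - c, b - c]%classic.
  apply/seteqP; split => x /=; rewrite !in_itv /= ?lerBrDr ?ltrBlDr //.
rewrite !lebesgue_measure_itv /= !lte_fin ltrD2r.
by case: ifP => // _; rewrite -!EFinD opprB addrA subrK.
Qed.

Lemma integral_shift (c : R) (h : R -> \bar R) :
  measurable_fun setT h -> (forall x, (0 <= h x)%E) ->
  (\int[mu]_x h (x + c)%R = \int[mu]_x h x)%E.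
Proof.
move=> mh h0.
rewrite [RHS](@eq_measure_integral _ _ _ _ (mpush mu (mkmfun (measurable_addc c))) mu); last first.
  by move=> A mA _; rewrite /mpush /pushforward /= lebesgue_shift.
by rewrite /mpush ge0_integral_pushforward //=; exact: measurable_addc.
Qed.
End shift.

Section density.
Context d (T : measurableType d) (R : realType).
Variables (nu mu : {measure set T -> \bar R}) (g : T -> R).
Hypothesis g0 : forall x, 0 <= g x.
Hypothesis mg : measurable_fun setT g.
Hypothesis nuE : forall A, measurable A -> nu A = (\int[mu]_(x in A) (g x)%:E)%E.
Local Open Scope ereal_scope.
Import HBNNSimple.

Lemma density_integral f E : (forall x, 0 <= f x) ->
    measurable E -> measurable_fun E f ->
  \int[mu]_(x in E) (f x * (g x)%:E) = \int[nu]_(x in E) f x.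
Proof.
move=> f0 mE mf.
have mgE : measurable_fun E (fun x => (g x)%:E).
  by apply/measurable_EFinP; exact: measurable_funTS.
pose h := nnsfun_approx mE mf.
have -> : \int[nu]_(x in E) f x =
    lim (\int[nu]_(x in E) (EFin \o h n) x @[n --> \oo]).
  have fE x : E x -> f x = lim ((EFin \o h n) x @[n --> \oo]).
    by move=> Ex; apply/esym/cvg_lim => //; exact: cvg_nnsfun_approx.
  under eq_integral => x /[!inE] /fE -> //.
  apply: monotone_convergence => //.
  - move=> n; apply/measurable_EFinP.
    by apply: (measurable_funS measurableT) => //; exact/measurable_funP.
  - by move=> n x Ex //=; rewrite lee_fin.
  - by move=> x Ex a b ab; rewrite lee_fin; exact/lefP/nd_nnsfun_approx.
have -> : \int[mu]_(x in E) (f x * (g x)%:E) =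
    lim (\int[mu]_(x in E) ((EFin \o h n) x * (g x)%:E) @[n --> \oo]).
  have fg x : E x -> f x * (g x)%:E = lim (((EFin \o h n) x * (g x)%:E) @[n --> \oo]).
    by move=> Ex; apply/esym/cvg_lim => //; apply: cvgeZr => //;
      exact: cvg_nnsfun_approx.
  under eq_integral => x /[!inE] /fg -> //.
  apply: monotone_convergence => [//| | |].
  - move=> n; apply/emeasurable_funM => //; apply/measurable_funTS.
    exact/measurable_EFinP.
  - by move=> n x Ex /=; rewrite mule_ge0 ?lee_fin.
  - by move=> x Ex a b ab/=; rewrite lee_wpmul2r ?lee_fin//; exact/lefP/nd_nnsfun_approx.
suff suf n : \int[mu]_(x in E) ((EFin \o h n) x * (g x)%:E) =
    \int[nu]_(x in E) (EFin \o h n) x.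
  by under eq_fun do rewrite suf.
transitivity (\int[nu]_(x in E)
   (\sum_(y \in range (h n)) (y * \1_(h n @^-1` [set y]) x)%:E)); last first.
  by apply: eq_integral => t tE; rewrite /= fimfunE -fsumEFin.
have indich m r : measurable_fun E (fun x => (r * \1_(h m @^-1` [set r]) x)%:E).
  by apply: (measurable_comp measurableT) => //; exact: measurable_funM.
rewrite ge0_integral_fsum//; last by move=> m y Ey; exact: nnfun_muleindic_ge0.
transitivity (\int[mu]_(x in E) (\sum_(y \in range (h n))
    (y * \1_(h n @^-1` [set y]) x)%:E * (g x)%:E)).
  under [RHS]eq_integral => x xE.
    rewrite -ge0_mule_fsuml => [|y]; last exact: nnfun_muleindic_ge0.
    rewrite fsumEFin // -(fimfunE _ x); over.
  by [].
rewrite ge0_integral_fsum//; last 2 first.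
  - by move=> y; apply: emeasurable_funM => //.
  - by move=> m y Ey; rewrite mule_ge0 ?lee_fin//; exact: nnfun_muleindic_ge0.
apply: eq_fsbigr => r rhn.
under [RHS]eq_integral do rewrite EFinM.
rewrite integralZl_indic_nnsfun => //.
under eq_integral do rewrite EFinM -muleA.
rewrite ge0_integralZl//.
- under eq_integral do rewrite muleC.
  rewrite (eq_integral ((fun x => (g x)%:E) \_ (h n @^-1` [set r]))); last first.
    by move=> x xE; rewrite epatch_indic.
  by rewrite -integral_mkcondr -nuE// integral_indic// setIC.
- apply: emeasurable_funM => //; exact/measurable_EFinP.
- by move=> t Et; rewrite mule_ge0 ?lee_fin.
- by move: rhn; rewrite inE => -[t _ <-]; rewrite lee_fin.
Qed.

End density.

Section rot.
Context {R : realType}.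
Local Notation mu := (@lebesgue_measure R).
Local Notation Rm := (measurableTypeR R).

Definition J (H : R -> R -> \bar R) := (\int[mu]_x \int[mu]_y H x y)%E.
Definition mH (H : R -> R -> \bar R) :=
  measurable_fun setT (fun p : Rm * Rm => H p.1 p.2).

Lemma mlin1 (a b : R) : measurable_fun setT (fun p : Rm * Rm => (a * p.1 + b * p.2 : Rm)).
Proof.
apply: (@measurable_funD _ (Rm * Rm)%type R).
  apply: (@measurable_funM _ (Rm * Rm)%type R) => //; exact: measurable_fst.
apply: (@measurable_funM _ (Rm * Rm)%type R) => //; exact: measurable_snd.
Qed.

Lemma mlin (a b c e : R) : measurable_fun setT
  (fun p : Rm * Rm => ((a * p.1 + b * p.2 : Rm), (c * p.1 + e * p.2 : Rm))).
Proof. by apply/measurable_fun_pair; apply: mlin1. Qed.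

Lemma mH_lin H a b c e : mH H ->
  mH (fun x y => H (a * x + b * y) (c * x + e * y)).
Proof. by move=> mh; apply: (measurableT_comp mh (mlin a b c e)). Qed.

Lemma JT H q : mH H -> (forall x y, (0 <= H x y)%E) ->
  J (fun x y => H x (y + q * x)) = J H.
Proof.
move=> mh h0; apply: eq_integral => x _.
apply: (@integral_shift R (q * x) (H x)) => //.
exact: (measurable_fun_pair2 x mh).
Qed.

Lemma JS H t : mH H -> (forall x y, (0 <= H x y)%E) ->
  J (fun x y => H (x + t * y) y) = J H.
Proof.
move=> mh h0; rewrite /J.
have mh' : mH (fun x y => H (x + t * y) y).
  have := mH_lin 1 t 0 1 mh; rewrite /mH.
  by under eq_fun do rewrite !mul1r mul0r add0r.
have F1 := @fubini_tonelli _ _ _ _ _ mu mu (fun p => H (p.1 + t * p.2) p.2) mh' (fun p => h0 _ _).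
have F2 := @fubini_tonelli _ _ _ _ _ mu mu (fun p => H p.1 p.2) mh (fun p => h0 _ _).
simpl in F1, F2; rewrite F1 F2.
apply: eq_integral => y _.
apply: (@integral_shift R (t * y) (fun x => H x y)) => //.
exact: (measurable_fun_pair1 y mh).
Qed.

Lemma JR H c s : mH H -> (forall x y, (0 <= H x y)%E) ->
  c ^+ 2 + s ^+ 2 = 1 -> 0 <= c ->
  J (fun x y => H (c * x + s * y) (- s * x + c * y)) = J H.
Proof.
move=> mh h0 cs c0.
have c1 : 1 + c != 0 by rewrite gt_eqF // ltr_wpDr.
have [t hs] : exists t, s = t * (1 + c) by exists (s / (1 + c)); rewrite mulfVK.
have E : 1 - c - t ^+ 2 * (1 + c) = 0.
  have : t ^+ 2 * (1 + c) ^+ 2 = s ^+ 2 by rewrite hs exprMn.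
  have -> : s ^+ 2 = (1 - c) * (1 + c).
    by rewrite -[s ^+ 2](addKr (c ^+ 2)) cs; ring.
  move=> h; apply/eqP; rewrite -(mulIr_eq0 _ (rregP c1)).
  by apply/eqP; rewrite mulrBl -h; ring.
set G1 := fun x y => H (x + t * y) y.
set G2 := fun x y => G1 x (y + (- s) * x).
set G3 := fun x y => G2 (x + t * y) y.
have mG1 : mH G1.
  have := mH_lin 1 t 0 1 mh; rewrite /mH.
  by under eq_fun do rewrite !mul1r mul0r add0r.
have mG2 : mH G2.
  have := mH_lin 1 0 (- s) 1 mG1; rewrite /mH.
  by under eq_fun do rewrite !mul1r mul0r addr0 addrC.
have -> : (fun x y => H (c * x + s * y) (- s * x + c * y)) = G3.
  apply/funext => x; apply/funext => y; rewrite /G3 /G2 /G1.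
  congr H.
    apply/eqP; rewrite -subr_eq0; apply/eqP.
    transitivity (- ((x + t * y) * (1 - c - t ^+ 2 * (1 + c)))).
      by rewrite hs; ring.
    by rewrite E mulr0 oppr0.
  apply/eqP; rewrite -subr_eq0; apply/eqP.
  transitivity (- (y * (1 - c - t ^+ 2 * (1 + c)))).
    by rewrite hs; ring.
  by rewrite E mulr0 oppr0.
rewrite /G3 (JS t mG2) /G2; last by move=> x y; exact: h0.
by rewrite (JT (-s) mG1) ?JS // => x y; exact: h0.
Qed.

End rot.

Section normrot.
Context {R : realType} (sigma : R).
Hypothesis s0 : sigma != 0.
Local Notation mu := (@lebesgue_measure R).
Local Notation Rm := (measurableTypeR R).
Local Notation N := (normal_prob (0:R) sigma).
Local Notation phi := (normal_pdf (0:R) sigma).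

Lemma N_dens (F : R -> \bar R) : measurable_fun setT F -> (forall x, (0 <= F x)%E) ->
  (\int[N]_x F x = \int[mu]_x (F x * (phi x)%:E))%E.
Proof.
move=> mF F0; apply/esym.
apply: (@density_integral _ Rm R N mu phi) => //.
- by move=> x; exact: normal_pdf_ge0.
- exact: measurable_normal_pdf.
Qed.

Lemma NN_J h : mH h -> (forall x y, (0 <= h x y)%E) ->
  (\int[N]_x \int[N]_y h x y)%E = J (fun x y => h x y * (phi x * phi y)%:E)%E.
Proof.
move=> mh h0.
rewrite N_dens; last 2 first.
- exact: (@measurable_fun_fubini_tonelli_F _ _ Rm Rm R N (fun p => h p.1 p.2) mh (fun p => h0 _ _)).
- by move=> x; apply: integral_ge0 => y _; exact: h0.
apply: eq_integral => x _.
rewrite N_dens; last 2 first.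
- exact: (measurable_fun_pair2 x mh).
- by move=> y; exact: h0.
rewrite -ge0_integralZr //; last 3 first.
- apply: emeasurable_funM; first exact: (measurable_fun_pair2 x mh).
  by apply/measurable_EFinP; exact: measurable_normal_pdf.
- by move=> y _; rewrite mule_ge0 // lee_fin normal_pdf_ge0.
- by rewrite lee_fin normal_pdf_ge0.
apply: eq_integral => y _.
by rewrite -muleA -EFinM [phi y * _]mulrC.
Qed.

Lemma phi_rot c s x y : c ^+ 2 + s ^+ 2 = 1 ->
  phi (c * x + s * y) * phi (- s * x + c * y) = phi x * phi y.
Proof.
move=> cs; rewrite /normal_pdf (negbTE s0) /normal_fun !subr0.
rewrite mulrACA [in RHS]mulrACA -!expRD; congr (_ * expR _).
rewrite -!mulNr -!mulrDl; congr (_ * _).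
transitivity (- ((c ^+ 2 + s ^+ 2) * (x ^+ 2 + y ^+ 2))); first by ring.
by rewrite cs; ring.
Qed.

Lemma mphi2 : measurable_fun setT (fun p : Rm * Rm => (phi p.1 * phi p.2)%:E).
Proof.
apply/measurable_EFinP; apply: (@measurable_funM _ (Rm * Rm)%type R).
- by apply: measurableT_comp; [exact: measurable_normal_pdf|exact: measurable_fst].
- by apply: measurableT_comp; [exact: measurable_normal_pdf|exact: measurable_snd].
Qed.

Lemma NN_rot (h : R -> R -> \bar R) (c s : R) : mH h -> (forall x y, (0 <= h x y)%E) ->
  c ^+ 2 + s ^+ 2 = 1 -> 0 <= c ->
  (\int[N]_x \int[N]_y h (c * x + s * y)%R (- s * x + c * y)%R)%E =
  (\int[N]_x \int[N]_y h x y)%E.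
Proof.
move=> mh h0 cs c0.
rewrite (NN_J (h := fun x y => h (c * x + s * y) (- s * x + c * y))); last 2 first.
- exact: mH_lin.
- by move=> x y; exact: h0.
rewrite (NN_J mh h0).
pose G x y := (h x y * (phi x * phi y)%:E)%E.
have mG : mH G.
  apply: emeasurable_funM; first exact: mh.
  exact: mphi2.
have G0 x y : (0 <= G x y)%E by rewrite mule_ge0 // lee_fin mulr_ge0 // normal_pdf_ge0.
transitivity (J (fun x y => G (c * x + s * y) (- s * x + c * y))); last exact: (JR mG G0 cs c0).
congr J; apply/funext => x; apply/funext => y.
by rewrite /G phi_rot.
Qed.
End normrot.

Section step3.
Context {R : realType}.
Local Notation Rm := (measurableTypeR R).

Definition ind (A : set (R * R)) (u v : R) : \bar R := (\1_A (u, v))%:E.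

Lemma ind_ge0 A u v : (0 <= ind A u v)%E.
Proof. by rewrite /ind lee_fin indicE; case: (_ \in _). Qed.

Lemma m_ind d (T : measurableType d) (A : set (R * R)) (f g : T -> R) :
  measurable A -> measurable_fun setT f -> measurable_fun setT g ->
  measurable_fun setT (fun t => ind A (f t) (g t)).
Proof.
move=> mA mf mg; apply/measurable_EFinP.
have := measurableT_comp (measurable_indic mA) (measurable_fun_pair mf mg).
move=> H; exact: H.
Qed.

Lemma mlin3c (a b c e : R) :
  measurable_fun setT (fun p : (Rm * Rm) * Rm => a * p.1.1 + b * p.1.2 + c * p.2 + e : R).
Proof.
have m11 : measurable_fun setT (fun p : (Rm * Rm) * Rm => p.1.1 : R).
  by apply: measurableT_comp; [exact: measurable_fst|exact: measurable_fst].
have m12 : measurable_fun setT (fun p : (Rm * Rm) * Rm => p.1.2 : R).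
  by apply: measurableT_comp; [exact: measurable_snd|exact: measurable_fst].
have m2 : measurable_fun setT (fun p : (Rm * Rm) * Rm => p.2 : R).
  exact: measurable_snd.
apply: measurable_funD => //; apply: measurable_funD; first apply: measurable_funD.
- by apply: measurable_funM.
- by apply: measurable_funM.
- by apply: measurable_funM.
Qed.

Lemma mlin2c (a b e : R) :
  measurable_fun setT (fun p : Rm * Rm => a * p.1 + b * p.2 + e : R).
Proof.
apply: measurable_funD => //; apply: measurable_funD.
- by apply: measurable_funM => //; exact: measurable_fst.
- by apply: measurable_funM => //; exact: measurable_snd.
Qed.

Lemma m_ind3 A (a1 b1 c1 e1 a2 b2 c2 e2 : R) (F : (Rm * Rm) * Rm -> \bar R) :
  measurable A ->
  (forall p, F p = ind A (a1 * p.1.1 + b1 * p.1.2 + c1 * p.2 + e1)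
                         (a2 * p.1.1 + b2 * p.1.2 + c2 * p.2 + e2)) ->
  measurable_fun setT F.
Proof.
move=> mA FE; rewrite (funext FE).
by apply: m_ind => //; exact: mlin3c.
Qed.

Lemma m_ind2 A (a1 b1 e1 a2 b2 e2 : R) (F : R -> R -> \bar R) :
  measurable A ->
  (forall x y, F x y = ind A (a1 * x + b1 * y + e1) (a2 * x + b2 * y + e2)) ->
  mH F.
Proof.
move=> mA FE; rewrite /mH.
have -> : (fun p : Rm * Rm => F p.1 p.2) =
  (fun p : Rm * Rm => ind A (a1 * p.1 + b1 * p.2 + e1) (a2 * p.1 + b2 * p.2 + e2)).
  by apply/funext => p; rewrite FE.
by apply: m_ind => //; exact: mlin2c.
Qed.

Lemma rotpar (p q : R) : 0 <= p -> exists r c s,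
  [/\ 0 <= r, r ^+ 2 = p ^+ 2 + q ^+ 2, c ^+ 2 + s ^+ 2 = 1 & 0 <= c] /\
      (r * c = p /\ r * s = q).
Proof.
move=> p0; pose r := Num.sqrt (p ^+ 2 + q ^+ 2).
have r0 : 0 <= r by exact: sqrtr_ge0.
have r2 : r ^+ 2 = p ^+ 2 + q ^+ 2 by rewrite sqr_sqrtr // addr_ge0 // sqr_ge0.
have [rz|rnz] := eqVneq r 0.
  have pq0 : p ^+ 2 + q ^+ 2 = 0 by rewrite -r2 rz expr0n.
  have p20 : p ^+ 2 = 0 by apply/eqP; rewrite eq_le sqr_ge0 andbT -pq0 lerDl sqr_ge0.
  have q20 : q ^+ 2 = 0 by move: pq0; rewrite p20 add0r.
  exists r, 1, 0; split; first split => //.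
  - by rewrite expr1n expr0n addr0.
  split.
  - by move/eqP: p20; rewrite expf_eq0 /= => /eqP ->; rewrite rz mul0r.
  - by move/eqP: q20; rewrite expf_eq0 /= => /eqP ->; rewrite rz mul0r.
exists r, (p / r), (q / r); split; first split => //.
- by rewrite !expr_div_n -mulrDl -r2 divff // expf_neq0.
- by rewrite divr_ge0.
split.
- by rewrite mulrC divfK.
- by rewrite mulrC divfK.
Qed.

End step3.

Section step3b.
Context {R : realType} (sigma : R).
Hypothesis s0 : sigma != 0.
Local Notation Rm := (measurableTypeR R).
Local Notation N := (normal_prob (0:R) sigma).

Lemma step3 (al be ga a b : R) : 0 <= al -> 0 <= ga -> exists r be' ga',
  [/\ 0 <= r, 0 <= ga', r ^+ 2 = al ^+ 2 + a ^+ 2 & r * be' = al * be + a * b] /\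
  be' ^+ 2 + ga' ^+ 2 = be ^+ 2 + ga ^+ 2 + b ^+ 2 /\
  forall A, measurable A ->
   (\int[N]_x \int[N]_y \int[N]_w ind A (al * x + a * w) (be * x + ga * y + b * w))%E
   = (\int[N]_x \int[N]_y ind A (r * x) (be' * x + ga' * y))%E.
Proof.
move=> al0 ga0.
have [r [c [s [[r0 r2 cs c0] [rc rs]]]]] := rotpar a al0.
pose be' := be * c + b * s; pose de := b * c - be * s.
have [g' [c' [s' [[g0 g2 cs' c0'] [gc gs]]]]] := rotpar de ga0.
exists r, be', g'; split; [split => //|split].
  by transitivity (be * (r * c) + b * (r * s)); [rewrite /be'; ring|rewrite rc rs; ring].
  transitivity ((be ^+ 2 + b ^+ 2) * (c ^+ 2 + s ^+ 2) + ga ^+ 2).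
    by rewrite g2 /be' /de; ring.
  by rewrite cs; ring.
move=> A mA.
have mF : measurable_fun setT (fun q : (Rm * Rm) * Rm =>
    ind A (al * q.1.1 + a * q.2) (be * q.1.1 + ga * q.1.2 + b * q.2)).
  by apply: (@m_ind3 _ A al 0 a 0 be ga b 0) => // q; congr ind; ring.
have F1 := @fubini_tonelli _ _ Rm Rm R N N
  (fun p : Rm * Rm => \int[N]_w ind A (al * p.1 + a * w) (be * p.1 + ga * p.2 + b * w))%E
  (@measurable_fun_fubini_tonelli_F _ _ (Rm * Rm)%type Rm R N _ mF (fun _ => ind_ge0 _ _ _))
  (fun p => integral_ge0 _ (fun w _ => ind_ge0 _ _ _)).
simpl in F1; rewrite F1; clear F1.
transitivity (\int[N]_y \int[N]_u \int[N]_v ind A (r * u) (be' * u + de * v + ga * y))%E.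
  apply: eq_integral => y _.
  have mh : mH (fun u v => ind A (r * u) (be' * u + de * v + ga * y)).
    by apply: (@m_ind2 _ A r 0 0 be' de (ga * y)) => // u v; congr ind; ring.
  rewrite -(NN_rot s0 mh (fun _ _ => ind_ge0 _ _ _) cs c0).
  apply: eq_integral => x _; apply: eq_integral => w _; congr ind.
    by transitivity ((r * c) * x + (r * s) * w); [rewrite rc rs|ring].
  transitivity ((be * (c ^+ 2 + s ^+ 2)) * x + ga * y + (b * (c ^+ 2 + s ^+ 2)) * w).
    by rewrite cs !mulr1.
  by rewrite /be' /de; ring.
have mG : measurable_fun setT (fun q : (Rm * Rm) * Rm =>
    ind A (r * q.1.2) (be' * q.1.2 + de * q.2 + ga * q.1.1)).
  by apply: (@m_ind3 _ A 0 r 0 0 ga be' de 0) => // q; congr ind; ring.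
have F2 := @fubini_tonelli _ _ Rm Rm R N N
  (fun p : Rm * Rm => \int[N]_v ind A (r * p.2) (be' * p.2 + de * v + ga * p.1))%E
  (@measurable_fun_fubini_tonelli_F _ _ (Rm * Rm)%type Rm R N _ mG (fun _ => ind_ge0 _ _ _))
  (fun p => integral_ge0 _ (fun w _ => ind_ge0 _ _ _)).
simpl in F2; rewrite F2; clear F2.
apply: eq_integral => u _.
transitivity (\int[N]_y \int[N]_v ind A (r * u) (be' * u + g' * y))%E.
  have mh : mH (fun y v => ind A (r * u) (be' * u + g' * y)).
    by apply: (@m_ind2 _ A 0 0 (r * u) g' 0 (be' * u)) => // y v; congr ind; ring.
  rewrite -(NN_rot s0 mh (fun _ _ => ind_ge0 _ _ _) cs' c0').
  apply: eq_integral => y _; apply: eq_integral => v _; congr ind.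
  by transitivity (be' * u + (g' * s') * v + (g' * c') * y); [rewrite gs gc|ring].
apply: eq_integral => y _.
rewrite (_ : (fun v => _) = cst (ind A (r * u) (be' * u + g' * y))) //.
rewrite integral_cst // -[RHS]mule1; congr (_ * _)%E.
exact: probability_setT.
Qed.

End step3b.

Section sums.
Context {R : realType} (n k : nat) (i0 : 'I_n) (Hi0 : val i0 = k).

Lemma sum_split (F : 'I_n -> R) :
  \sum_(i < n | (i < k.+1)%N) F i = \sum_(i < n | (i < k)%N) F i + F i0.
Proof.
rewrite (bigD1 i0) /=; last by rewrite Hi0.
rewrite addrC; congr (_ + _); apply: eq_bigl => i.
rewrite ltnS leq_eqVlt -(inj_eq val_inj) /= Hi0.
by case: ltngtP.
Qed.

Lemma prod_split (F : 'I_n -> \bar R) :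
  (\prod_(i < n | (k <= i)%N) F i = F i0 * \prod_(i < n | (k < i)%N) F i)%E.
Proof.
rewrite (bigD1 i0) /=; last by rewrite Hi0.
congr (_ * _)%E; apply: eq_bigl => i.
rewrite -(inj_eq val_inj) /= Hi0.
by case: ltngtP.
Qed.
End sums.

Section law.
Context {R : realType} (sigma : R).
Local Notation Rm := (measurableTypeR R).
Local Notation N := (normal_prob (0:R) sigma).

Definition law (al be ga : R) (A : set (R * R)) :=
  (\int[N]_x \int[N]_y ind A (al * x) (be * x + ga * y))%E.

Definition Lmap (al be ga : R) (p : Rm * Rm) : R * R :=
  (al * p.1, be * p.1 + ga * p.2).

Lemma mLmap al be ga : measurable_fun setT (Lmap al be ga).
Proof.
apply/measurable_fun_pair.
- by apply: measurable_funM => //; exact: measurable_fst.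
- apply: measurable_funD.
  + by apply: measurable_funM => //; exact: measurable_fst.
  + by apply: measurable_funM => //; exact: measurable_snd.
Qed.

Lemma lawE al be ga A : measurable A ->
  (N \x N)%E (Lmap al be ga @^-1` A) = law al be ga A.
Proof.
move=> mA.
have mX : measurable (Lmap al be ga @^-1` A).
  by rewrite -[X in measurable X]setTI; exact: (mLmap al be ga).
rewrite -(setIT (Lmap al be ga @^-1` A)) -integral_indic //.
rewrite (fubini_tonelli1 (fun p => (\1_(Lmap al be ga @^-1` A) p)%:E)) //.
by apply/measurable_EFinP; exact: measurable_indic.
Qed.

End law.

Section prob.
Context d (T : measurableType d) (R : realType) (P : probability T R)
  (n : nat) (sigma : R) (z : 'I_n -> T -> R).
Hypothesis hz : iid_gaussian_vector P sigma z.
Hypothesis s0 : sigma != 0.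
Local Notation Rm := (measurableTypeR R).
Local Notation N := (normal_prob (0:R) sigma).

Definition Sk (a : 'I_n -> R) k t := \sum_(i < n | (i < k)%N) a i * z i t.

Lemma mz i : measurable_fun setT (z i).
Proof. by case: hz. Qed.

Lemma mSk a k : measurable_fun setT (Sk a k).
Proof.
have -> : Sk a k = fun t => \sum_(i < n) (if (i < k)%N then a i * z i t else 0).
  by apply/funext => t; rewrite /Sk big_mkcond.
apply: (@measurable_sum _ _ _ setT _ (index_enum 'I_n) (fun i t => if (i < k)%N then a i * z i t else 0)) => i.
case: (i < k)%N; last exact: measurable_cst.
by apply: measurable_funM => //; exact: mz.
Qed.

Definition claim (a b : 'I_n -> R) k := exists al be ga,
  [/\ 0 <= al, 0 <= ga, al ^+ 2 = \sum_(i < n | (i < k)%N) a i ^+ 2 &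
      al * be = \sum_(i < n | (i < k)%N) a i * b i] /\
  be ^+ 2 + ga ^+ 2 = \sum_(i < n | (i < k)%N) b i ^+ 2 /\
  forall (A : set (R * R)) (B : 'I_n -> set R), measurable A ->
    (forall i, measurable (B i)) ->
    P [set t | A (Sk a k t, Sk b k t) /\ forall i : 'I_n, (k <= i)%N -> B i (z i t)] =
    (law sigma al be ga A * \prod_(i < n | (k <= i)%N) N (B i))%E.

Lemma claim0 a b : claim a b 0.
Proof.
have S0 c t : Sk c 0 t = 0 by rewrite /Sk big_pred0.
have s0' (F : 'I_n -> R) : \sum_(i < n | (i < 0)%N) F i = 0 by rewrite big_pred0.
exists 0, 0, 0; split; [split => //|split].
- by rewrite s0' expr0n.
- by rewrite s0' mul0r.
- by rewrite s0' expr0n addr0.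
move=> A B mA mB.
have law0 : law sigma 0 0 0 A = ind A 0 0.
  rewrite /law.
  transitivity (\int[N]_x \int[N]_y (cst (ind A 0 0)) y)%E.
    by apply: eq_integral => x _; apply: eq_integral => y _; rewrite !mul0r addr0.
  rewrite (_ : (fun x => _) = cst (ind A 0 0)); last first.
    apply/funext => x; rewrite integral_cst // -[RHS]mule1; congr (_ * _)%E.
    exact: probability_setT.
  rewrite integral_cst // -[RHS]mule1; congr (_ * _)%E.
  exact: probability_setT.
rewrite law0 /ind indicE.
have [hz1 hz2 hz3] := hz.
case: (boolP ((0, 0) \in A)) => hA /=.
- rewrite mul1e.
  transitivity (P [set t | forall i, B i (z i t)]).
    apply: f_equal; apply/seteqP; split => t /=; rewrite !S0.
      by case=> _ h i; apply: h.
    by move=> h; split; [exact/set_mem|move=> i _; exact: h].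
  rewrite hz3 //; rewrite big_mkcond /=; apply: eq_bigr => i _.
  by rewrite hz2.
- rewrite mul0e.
  rewrite (_ : [set t | _] = set0) ?measure0 //.
  apply/seteqP; split => t //= [].
  by rewrite !S0 => /mem_set; rewrite (negbTE hA).
Qed.
End prob.

Section prob2.
Context d (T : measurableType d) (R : realType) (P : probability T R)
  (n : nat) (sigma : R) (z : 'I_n -> T -> R).
Hypothesis hz : iid_gaussian_vector P sigma z.
Hypothesis s0 : sigma != 0.
Local Notation Rm := (measurableTypeR R).
Local Notation N := (normal_prob (0:R) sigma).
Local Notation Sk := (Sk z).

Lemma claim_step a b k : (k < n)%N -> claim P sigma z a b k -> claim P sigma z a b k.+1.
Proof.
move=> kn [al [be [ga [[al0 ga0 Ha Hab] [Hb HP]]]]].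
pose i0 : 'I_n := Ordinal kn.
have Hi0 : val i0 = k by [].
have [r [be' [ga' [[r0 ga'0 Hr Hrb] [Hbg E3]]]]] :=
  @step3 R sigma s0 al be ga (a i0) (b i0) al0 ga0.
exists r, be', ga'; split; [split => //|split].
- by rewrite (sum_split Hi0) Hr Ha.
- by rewrite (sum_split Hi0) Hrb Hab.
- by rewrite (sum_split Hi0) Hbg -Hb.
move=> A B mA mB.
have [hz1 hz2 hz3] := hz.
pose Rest := [set t | forall i : 'I_n, (k < i)%N -> B i (z i t)].
have mRest : measurable Rest.
  have -> : Rest = \bigcap_(i in [set i : 'I_n | (k < i)%N]) (z i @^-1` B i) by [].
  apply: fin_bigcap_measurable; first exact: finite_finset.
  by move=> i _; rewrite -[X in measurable X]setTI; exact: (hz1 i).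
have [Kr [Kr0 KE]] : exists Kr : R, 0 <= Kr /\
    (\prod_(i < n | (k < i)%N) N (B i))%E = Kr%:E.
  apply: (big_ind (fun x => exists Kr : R, 0 <= Kr /\ x = Kr%:E)).
  - by exists 1.
  - by move=> x y [x1 [x10 ->]] [y1 [y10 ->]]; exists (x1 * y1); rewrite mulr_ge0.
  - move=> i _; exists (fine (N (B i))); split.
      by apply: fine_ge0; exact: measure_ge0.
    rewrite fineK //; apply: fin_num_measure; exact: mB.
pose msc := mscale (NngNum Kr0) N.
have mL := mLmap al be ga.
pose mu1 := distribution (N \x N)%E (mkmfun mL).
pose W := fun t => ((Sk a k t, Sk b k t), (z i0 t : Rm)) : (R * R) * Rm.
have mW : measurable_fun setT W.
  apply: measurable_fun_pair; last first.
    by move=> mD Y mY; apply: (hz1 i0 mD Y mY).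
  by apply: measurable_fun_pair; exact: (mSk hz).
pose nu := mpush (mrestr P mRest) (mkmfun mW).
have Hrect : forall A1 C, measurable A1 -> measurable C ->
    nu (A1 `*` C) = (mu1 A1 * msc C)%E.
  move=> A1 C mA1 mC.
  pose B' := fun i => if i == i0 then C else B i.
  have mB' : forall i, measurable (B' i).
    by move=> i; rewrite /B'; case: (i == i0) => //; exact: mB.
  have setE : W @^-1` (A1 `*` C) `&` Rest =
      [set t | A1 (Sk a k t, Sk b k t) /\ forall i : 'I_n, (k <= i)%N -> B' i (z i t)].
    apply/seteqP; split => t /=.
      move=> [[h1 h2] h3]; split => // i; rewrite /B'.
      case: eqP => [-> //|/eqP ne ki]; apply: h3.
      by rewrite ltn_neqAle ki andbT -Hi0 (inj_eq val_inj) eq_sym.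
    move=> [h1 h2]; split; first split => //.
      by have := h2 i0; rewrite /B' eqxx; apply; rewrite Hi0.
    move=> i ki; have := h2 i (ltnW ki); rewrite /B'.
    by case: eqP => // ei; move: ki; rewrite ei Hi0 ltnn.
  change (P (W @^-1` (A1 `*` C) `&` Rest) = (mu1 A1 * msc C)%E).
  rewrite setE (HP A1 B' mA1 mB') (prod_split Hi0) /B' eqxx.
  rewrite (eq_bigr (fun i => N (B i))); last first.
    move=> i ki; case: eqP => // ei; move: ki; by rewrite ei Hi0 ltnn.
  rewrite KE.
  have -> : mu1 A1 = law sigma al be ga A1 by rewrite -lawE.
  by rewrite /msc /mscale /=; congr (_ * _)%E; exact: muleC.
have Huniq := product_measure_unique (m1 := mu1) (m2 := msc) Hrect.
pose F := fun q : (R * R) * Rm => ((q.1.1 + a i0 * q.2 : R), (q.1.2 + b i0 * q.2 : R)).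
have mF : measurable_fun setT F.
  apply: measurable_fun_pair.
  - apply: measurable_funD.
      by apply: measurableT_comp; [exact: measurable_fst|exact: measurable_fst].
    by apply: measurable_funM => //; exact: measurable_snd.
  - apply: measurable_funD.
      by apply: measurableT_comp; [exact: measurable_snd|exact: measurable_fst].
    by apply: measurable_funM => //; exact: measurable_snd.
have mG : measurable (F @^-1` A).
  by rewrite -[X in measurable X]setTI; exact: mF.
have setE2 : [set t : T | A (Sk a k.+1 t, Sk b k.+1 t) /\ (forall i : 'I_n, (k < i)%N -> B i (z i t))] = setI (W @^-1` (F @^-1` A)) Rest.
  apply/seteqP; split => t /=; rewrite /Sk !(sum_split Hi0) //.
rewrite setE2.
change (nu (F @^-1` A) = (law sigma r be' ga' A * \prod_(i < n | (k < i)%N) N (B i))%E).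
transitivity ((mu1 \x msc)%E (F @^-1` A)); first by symmetry; apply: Huniq.
rewrite KE muleC.
have mxs : measurable_fun setT (N \o xsection (F @^-1` A)).
  exact: (@measurable_fun_xsection _ _ (R * R)%type Rm R N _ mG).
rewrite /product_measure1 /=.
transitivity (Kr%:E * \int[mu1]_p N (xsection (F @^-1` A) p))%E.
  rewrite -ge0_integralZl //.
rewrite /mu1 ge0_integral_distribution; last 2 first.
- exact: mxs.
- by move=> p; exact: measure_ge0.
rewrite /law -E3 //.
apply: (f_equal (fun v => (Kr%:E * v)%E)).
rewrite (fubini_tonelli1 (fun q => N (xsection (F @^-1` A) (Lmap al be ga q)))); last 2 first.
- exact: measurableT_comp mxs mL.
- by move=> q; exact: measure_ge0.
apply: eq_integral => x _; rewrite /fubini_F; apply: eq_integral => y _.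
rewrite -(setIT (xsection _ _)) -integral_indic //; last first.
  exact: measurable_xsection.
apply: eq_integral => w _; rewrite /ind !indicE mem_xsection.
by rewrite /Lmap /F /=.
Qed.
End prob2.

Section prob3.
Context d (T : measurableType d) (R : realType) (P : probability T R)
  (n : nat) (sigma : R) (z : 'I_n -> T -> R).
Hypothesis hz : iid_gaussian_vector P sigma z.
Hypothesis s0 : sigma != 0.

Lemma claim_all a b k : (k <= n)%N -> claim P sigma z a b k.
Proof.
elim: k => [_|k IH kn]; first exact: claim0.
exact: (claim_step hz s0 kn (IH (ltnW kn))).
Qed.

Lemma gauss_law (a b : 'I_n -> R) : exists al be ga,
  [/\ 0 <= al, 0 <= ga, al ^+ 2 = \sum_(i < n) a i ^+ 2 &
      al * be = \sum_(i < n) a i * b i] /\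
  be ^+ 2 + ga ^+ 2 = \sum_(i < n) b i ^+ 2 /\
  forall A : set (R * R), measurable A ->
    P [set t | A (\sum_(i < n) a i * z i t, \sum_(i < n) b i * z i t)] =
    law sigma al be ga A.
Proof.
have [al [be [ga [[al0 ga0 Ha Hab] [Hb HP]]]]] := claim_all a b (leqnn n).
have fs (F : 'I_n -> R) : \sum_(i < n | (i < n)%N) F i = \sum_(i < n) F i.
  by apply: eq_bigl => i; rewrite ltn_ord.
exists al, be, ga; split; [split => //; rewrite -fs //|split; first by rewrite -fs].
move=> A mA.
have := HP A (fun _ => setT) mA (fun _ => measurableT).
rewrite big_pred0; last by move=> i; rewrite leqNgt ltn_ord.
rewrite mule1 => <-; apply: f_equal; apply/seteqP; split => t /=.
  by rewrite /Sk !fs => h; split.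
by rewrite /Sk !fs => -[].
Qed.

Lemma sq0 (x y : R) : x ^+ 2 + y ^+ 2 = 0 -> x = 0 /\ y = 0.
Proof.
move=> /eqP; rewrite paddr_eq0 ?sqr_ge0 // => /andP[/eqP h1 /eqP h2].
by split; apply/eqP; rewrite -sqrf_eq0 ?h1 ?h2.
Qed.

Lemma swap_law (a b : 'I_n -> R) :
  \sum_(i < n) a i ^+ 2 = \sum_(i < n) b i ^+ 2 ->
  forall A : set (R * R), measurable A ->
    P [set t | A (\sum_(i < n) a i * z i t, \sum_(i < n) b i * z i t)] =
    P [set t | A (\sum_(i < n) b i * z i t, \sum_(i < n) a i * z i t)].
Proof.
move=> hab A mA.
have [al1 [be1 [ga1 [[al10 ga10 Ha1 Hab1] [Hb1 HP1]]]]] := gauss_law a b.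
have [al2 [be2 [ga2 [[al20 ga20 Ha2 Hab2] [Hb2 HP2]]]]] := gauss_law b a.
rewrite HP1 // HP2 //.
have eal : al1 = al2.
  by apply/eqP; rewrite -(eqrXn2 (isT : (0 < 2)%N)) // Ha1 Ha2 hab.
have sab : \sum_(i < n) a i * b i = \sum_(i < n) b i * a i.
  by apply: eq_bigr => i _; rewrite mulrC.
have [al0|alnz] := eqVneq al1 0.
  have sa0 : \sum_(i < n) a i ^+ 2 = 0 by rewrite -Ha1 al0 expr0n.
  have [e1 f1] : be1 = 0 /\ ga1 = 0 by apply: sq0; rewrite Hb1 -hab.
  have [e2 f2] : be2 = 0 /\ ga2 = 0 by apply: sq0; rewrite Hb2.
  by rewrite -eal e1 f1 e2 f2.
have ebe : be1 = be2.
  by apply: (mulfI alnz); rewrite Hab1 eal Hab2 sab.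
have ega : ga1 = ga2.
  apply/eqP; rewrite -(eqrXn2 (isT : (0 < 2)%N)) //; apply/eqP.
  have := Hb1; rewrite -hab -Hb2 ebe => /eqP; rewrite (inj_eq (addrI _)) => /eqP //.
by rewrite -eal ebe ega.
Qed.

End prob3.


Unset Implicit Arguments. Set Strict Implicit. Set Printing Implicit Defensive.

Theorem corollary2p1 (R : realType) (d : measure_display)
  (T : measurableType d) (P : probability T R) (n p : nat)
  (X : 'M[R]_(n, p)) (beta : 'cV[R]_p) (sigma : R) (z : 'I_n -> T -> R)
  (lambda : R) (s : 'rV[R]_p) (Xt : 'M[R]_(n, p)) (j : 'I_p) :
  \rank X = p ->
  (forall k : 'I_p, (X^T *m X) k k = 1) ->
  0 < sigma ->
  iid_gaussian_vector P sigma z ->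
  0 < lambda ->
  (forall k : 'I_p, 0 <= s 0 k) ->
  psd (X^T *m X - diag_mx s) ->
  Xt^T *m X = X^T *m X - diag_mx s ->
  (forall k : 'I_p, (Xt^T *m Xt) k k = 1) ->
  beta j 0 = 0 ->
  let Sigma := X^T *m X in
  let Sigma_l := Sigma + lambda%:M in
  let y : T -> 'cV[R]_n := fun t => X *m beta + \col_i z i t in
  let beta_hat : T -> 'cV[R]_p := fun t => invmx Sigma_l *m X^T *m y t in
  let beta_tilde_j : T -> R := fun t =>
    beta_hat t j 0 + invmx Sigma_l j j * ((Xt^T *m y t) j 0 - (X^T *m y t) j 0) in
  eq_in_law2 P (fun t => (beta_hat t j 0, beta_tilde_j t))
               (fun t => (beta_tilde_j t, beta_hat t j 0)).
Proof.
move=> _ hX sig0 hz _ _ _ hXt hXt2 hb Sigma Sigma_l y beta_hat beta_tilde_j A mA.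
pose M := invmx Sigma_l *m X^T.
pose c := invmx Sigma_l j j.
pose u := fun i : 'I_n => M j i.
pose w := fun i : 'I_n => Xt i j - X i j.
pose v := fun i : 'I_n => u i + c * w i.
pose m0 := (M *m (X *m beta)) j 0.
have colE (B : 'M[R]_(p, n)) t : (B *m y t) j 0 = (B *m (X *m beta)) j 0 + \sum_i B j i * z i t.
  rewrite /y mulmxDr mxE [X in _ + X]mxE; congr (_ + _).
  by apply: eq_bigr => i _; rewrite mxE.
have E1 t : beta_hat t j 0 = m0 + \sum_i u i * z i t by rewrite /beta_hat colE.
have hD : (Xt^T *m (X *m beta)) j 0 - (X^T *m (X *m beta)) j 0 = 0.
  have subE (U V : 'cV[R]_p) : (U - V) j 0 = U j 0 - V j 0 by rewrite !mxE.
  have -> : Xt^T *m (X *m beta) = X^T *m (X *m beta) - diag_mx s *m beta.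
    by rewrite mulmxA hXt mulmxBl mulmxA.
  have hd : (diag_mx s *m beta) j 0 = 0 by rewrite mul_diag_mx mxE hb mulr0.
  by rewrite subE hd subr0 subrr.
have E2 t : beta_tilde_j t = m0 + \sum_i v i * z i t.
  rewrite /beta_tilde_j E1 !colE.
  set a1 := (Xt^T *m (X *m beta)) j 0.
  set b1 := (X^T *m (X *m beta)) j 0.
  set e1 := \sum_i Xt^T j i * z i t.
  set f1 := \sum_i X^T j i * z i t.
  transitivity (m0 + \sum_i u i * z i t + c * ((a1 - b1) + (e1 - f1))); first by rewrite /c; ring.
  rewrite hD add0r /e1 /f1 -sumrB mulr_sumr -addrA -big_split /=; congr (_ + _).
  apply: eq_bigr => i _; rewrite /v /w /u !mxE; ring.
have SigT : Sigma^T = Sigma by rewrite /Sigma trmx_mul trmxK.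
have hXtT : X^T *m Xt = Sigma - diag_mx s.
  by rewrite -[X^T *m Xt]trmxK trmx_mul trmxK hXt linearB /= tr_diag_mx SigT.
have Suw : \sum_i u i * w i = - (c * s 0 j).
  transitivity ((M *m Xt) j j - (M *m X) j j).
    by rewrite !mxE -sumrB; apply: eq_bigr => i _; rewrite /u /w mulrBr.
  rewrite /M -!mulmxA hXtT mulmxBr.
  have subE (U V : 'M[R]_p) : (U - V) j j = U j j - V j j by rewrite !mxE.
  have hd : (invmx Sigma_l *m diag_mx s) j j = c * s 0 j by rewrite mul_mx_diag mxE.
  by rewrite subE hd /Sigma; ring.
have Sww : \sum_i w i ^+ 2 = 2 * s 0 j.
  transitivity ((Xt^T *m Xt) j j + (X^T *m X) j j - 2 * (Xt^T *m X) j j).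
    rewrite !mxE mulr_sumr -!big_split -sumrB /=; apply: eq_bigr => i _.
    by rewrite /w !mxE; ring.
  rewrite hXt2 hX hXt.
  have subE (U V : 'M[R]_p) : (U - V) j j = U j j - V j j by rewrite !mxE.
  rewrite subE hX [diag_mx s j j]mxE eqxx mulr1n; ring.
have E3 : \sum_i u i ^+ 2 = \sum_i v i ^+ 2.
  transitivity (\sum_i (u i ^+ 2 + (2 * c) * (u i * w i) + c ^+ 2 * w i ^+ 2)); last first.
    by apply: eq_bigr => i _; rewrite /v; ring.
  rewrite !big_split /= -!mulr_sumr Suw Sww; ring.
have s0 : sigma != 0 by rewrite gt_eqF.
pose A' := [set q : R * R | A (m0 + q.1, m0 + q.2)].
have mA' : measurable A'.
  have msh : measurable_fun setT (fun q : R * R => (m0 + q.1, m0 + q.2)).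
    by apply: measurable_fun_pair; apply: measurable_funD => //;
      first [exact: measurable_fst|exact: measurable_snd].
  by rewrite -[A']setTI; exact: msh.
have -> : (fun t => (beta_hat t j 0, beta_tilde_j t)) @^-1` A =
    [set t | A' (\sum_i u i * z i t, \sum_i v i * z i t)].
  by apply/seteqP; split => t /=; rewrite E1 E2.
have -> : (fun t => (beta_tilde_j t, beta_hat t j 0)) @^-1` A =
    [set t | A' (\sum_i v i * z i t, \sum_i u i * z i t)].
  by apply/seteqP; split => t /=; rewrite E1 E2.
exact: (swap_law hz s0 E3 mA').
Qed.
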